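(* Let $d\ge2$, $\kappa,l>0$ and $V(\phi)=-\frac{d(d-1)}{2\kappa^2l^2}\cosh\big(\frac23\sqrt{\frac{d\kappa^2}{d-1}}\phi\big)$. Let $\rho=\tanh\big(\frac23\sqrt{\frac{d\kappa^2}{d-1}}\phi\big)$, $\psi=\sqrt{\frac{d\kappa^2}{d-1}}\phi$, and for $\nu\ge-1$ let $$W(\phi;\nu)=-\frac{d-1}{\kappa^2l}\frac{1}{(1-\rho^2)^{3/4}}\frac{1-\rho^2+\sqrt{1+2\nu\rho+\rho^2}}{\sqrt{2\big(1+\nu\rho+\sqrt{1+2\nu\rho+\rho^2}\big)}}.$$ Then: (i) for every $\nu\ge-1$, $W(\phi;\nu)=-\frac{d-1}{\kappa^2l}\big(1+\frac16\psi^2+\frac1{27}\nu\psi^3+O(\psi^4)\big)$ as $\phi\to0$; (ii) for every $\phi>0$, $\lim_{\nu\to\infty}W(\phi;\nu)=W_\infty(\phi):=-\frac{d-1}{\kappa^2l}(1-\rho^2)^{-3/4}$; (iii) $W_\infty$ satisfies $V=\frac12\big(W_\infty'^2-\frac{d\kappa^2}{d-1}W_\infty^2\big)$ and $W_\infty=-\frac{d-1}{\kappa^2l}\big(1+\frac13\psi^2+O(\psi^4)\big)$. In particular (with $m^2l^2=-2d^2/9$, $\Delta_-=d/3$, $\Delta_+=2d/3$), each $W(\cdot;\nu)$ with finite $\nu$ has leading behaviour $-\frac{d-1}{\kappa^2l}-\frac{\Delta_-}{2l}\phi^2$, whereas $W_\infty$ has leading behaviour $-\frac{d-1}{\kappa^2l}-\frac{\Delta_+}{2l}\phi^2$.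 *)

(* Defs.v *)
From Stdlib Require Import Reals Lra.
From Coquelicot Require Import Coquelicot.
Open Scope R_scope.

Definition cK (d : nat) (kappa : R) : R := sqrt (INR d * kappa ^ 2 / (INR d - 1)).

Definition Vpot (d : nat) (kappa l phi : R) : R :=
  - (INR d * (INR d - 1)) / (2 * kappa ^ 2 * l ^ 2) * cosh (2 / 3 * cK d kappa * phi).

Definition rho (d : nat) (kappa phi : R) : R := tanh (2 / 3 * cK d kappa * phi).
Definition psi (d : nat) (kappa phi : R) : R := cK d kappa * phi.

Definition Wsup (d : nat) (kappa l nu phi : R) : R :=
  let r := rho d kappa phi in
  let s := sqrt (1 + 2 * nu * r + r ^ 2) in
  - (INR d - 1) / (kappa ^ 2 * l)
  * / Rpower (1 - r ^ 2) (3 / 4)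
  * ((1 - r ^ 2 + s) / sqrt (2 * (1 + nu * r + s))).

Definition Winf (d : nat) (kappa l phi : R) : R :=
  let r := rho d kappa phi in
  - (INR d - 1) / (kappa ^ 2 * l) * Rpower (1 - r ^ 2) (- (3 / 4)).

Definition bigO0 (f g : R -> R) : Prop :=
  exists C delta : R, 0 < delta /\
    forall x : R, Rabs x < delta -> Rabs (f x) <= C * Rabs (g x).

(* conformal dimensions for m^2 l^2 = -2 d^2 / 9 *)
Definition Delta_minus (d : nat) : R := INR d / 3.
Definition Delta_plus (d : nat) : R := 2 * INR d / 3.

(* Main.v *)
Require Import Defs.
From Stdlib Require Import Reals Lra Psatz.
From Coquelicot Require Import Coquelicot.
Open Scope R_scope.

Record C4 := mk4 { a0 : R; a1 : R; a2 : R; a3 : R }.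
Definition cub (a : C4) (t : R) : R := a0 a + a1 a * t + a2 a * t ^ 2 + a3 a * t ^ 3.
Definition approx (f : R -> R) (a : C4) : Prop :=
  exists K d : R, 0 <= K /\ 0 < d /\
    forall t, Rabs t < d -> Rabs (f t - cub a t) <= K * t ^ 4.
Definition sabs (a : C4) : R := Rabs (a0 a) + Rabs (a1 a) + Rabs (a2 a) + Rabs (a3 a).

Lemma sabs_ge0 a : 0 <= sabs a.
Proof. unfold sabs; pose proof (Rabs_pos (a0 a)); pose proof (Rabs_pos (a1 a));
  pose proof (Rabs_pos (a2 a)); pose proof (Rabs_pos (a3 a)); lra. Qed.

Lemma pow_le1 t n : Rabs t <= 1 -> Rabs (t ^ n) <= 1.
Proof. intros H. rewrite <- RPow_abs. replace 1 with (1 ^ n) by apply pow1.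
  apply pow_incr; split; [apply Rabs_pos|exact H]. Qed.

Lemma t4_nonneg t : 0 <= t ^ 4.
Proof. replace (t^4) with ((t^2)^2) by ring. apply pow2_ge_0. Qed.

Lemma t4_le1 t : Rabs t <= 1 -> t ^ 4 <= 1.
Proof. intros H. pose proof (pow_le1 t 4 H). rewrite Rabs_right in H0; [lra|].
  apply Rle_ge, t4_nonneg. Qed.

Lemma abs_mul_le u v U V : Rabs u <= U -> Rabs v <= V -> Rabs (u * v) <= U * V.
Proof. intros H1 H2. rewrite Rabs_mult. apply Rmult_le_compat; auto using Rabs_pos. Qed.

Lemma cub_bound a t : Rabs t <= 1 -> Rabs (cub a t) <= sabs a.
Proof. intros H. unfold cub, sabs.
  pose proof (pow_le1 t 2 H). pose proof (pow_le1 t 3 H).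
  pose proof (abs_mul_le (a1 a) t (Rabs (a1 a)) 1 (Rle_refl _) H).
  pose proof (abs_mul_le (a2 a) (t^2) (Rabs (a2 a)) 1 (Rle_refl _) H0).
  pose proof (abs_mul_le (a3 a) (t^3) (Rabs (a3 a)) 1 (Rle_refl _) H1).
  pose proof (Rabs_triang (a0 a + a1 a * t + a2 a * t ^ 2) (a3 a * t^3)).
  pose proof (Rabs_triang (a0 a + a1 a * t) (a2 a * t ^ 2)).
  pose proof (Rabs_triang (a0 a) (a1 a * t)). lra. Qed.

Lemma cub_near a t : Rabs t <= 1 -> Rabs (cub a t - a0 a) <= Rabs t * sabs a.
Proof. intros H.
  replace (cub a t - a0 a) with (t * cub (mk4 (a1 a) (a2 a) (a3 a) 0) t) by (unfold cub; simpl; ring).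
  rewrite Rabs_mult. apply Rmult_le_compat_l; [apply Rabs_pos|].
  eapply Rle_trans; [apply cub_bound; auto|]. unfold sabs; simpl.
  rewrite Rabs_R0. pose proof (Rabs_pos (a0 a)). lra. Qed.

Lemma approx_ext f g a : (forall t, f t = g t) -> approx f a -> approx g a.
Proof. intros E [K [d [HK [Hd H]]]]. exists K, d; repeat split; auto.
  intros t Ht. rewrite <- E; auto. Qed.

Lemma approx_eq f a x y z w : approx f a -> a0 a = x -> a1 a = y -> a2 a = z -> a3 a = w ->
  approx f (mk4 x y z w).
Proof. destruct a; simpl; intros; subst; auto. Qed.

Lemma approx_exact f a : (forall t, f t = cub a t) -> approx f a.
Proof. intros E. exists 0, 1; repeat split; try lra. intros t _. rewrite E.
  unfold Rminus; rewrite Rplus_opp_r, Rabs_R0; lra. Qed.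

Definition addC a b := mk4 (a0 a + a0 b) (a1 a + a1 b) (a2 a + a2 b) (a3 a + a3 b).
Lemma approx_add f g a b : approx f a -> approx g b -> approx (fun t => f t + g t) (addC a b).
Proof. intros [K1 [d1 [HK1 [Hd1 H1]]]] [K2 [d2 [HK2 [Hd2 H2]]]].
  exists (K1 + K2), (Rmin d1 d2); repeat split; try lra.
  apply Rmin_pos; auto. intros t Ht.
  assert (A1 : Rabs t < d1) by (eapply Rlt_le_trans; [exact Ht|apply Rmin_l]).
  assert (A2 : Rabs t < d2) by (eapply Rlt_le_trans; [exact Ht|apply Rmin_r]).
  specialize (H1 t A1); specialize (H2 t A2).
  replace (f t + g t - cub (addC a b) t) with ((f t - cub a t) + (g t - cub b t))
    by (unfold cub, addC; simpl; ring).
  eapply Rle_trans; [apply Rabs_triang|]. lra. Qed.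

Definition scalC k a := mk4 (k * a0 a) (k * a1 a) (k * a2 a) (k * a3 a).
Lemma approx_scal k f a : approx f a -> approx (fun t => k * f t) (scalC k a).
Proof. intros [K [d [HK [Hd H]]]]. exists (Rabs k * K), d; repeat split; auto.
  apply Rmult_le_pos; auto using Rabs_pos. intros t Ht.
  replace (k * f t - cub (scalC k a) t) with (k * (f t - cub a t)) by (unfold cub, scalC; simpl; ring).
  rewrite Rabs_mult, Rmult_assoc. apply Rmult_le_compat_l; auto using Rabs_pos. Qed.

Lemma approx_const c : approx (fun _ => c) (mk4 c 0 0 0).
Proof. apply approx_exact; intros; unfold cub; simpl; ring. Qed.
Lemma approx_id : approx (fun t => t) (mk4 0 1 0 0).
Proof. apply approx_exact; intros; unfold cub; simpl; ring. Qed.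

Definition mulC a b := mk4 (a0 a * a0 b) (a0 a * a1 b + a1 a * a0 b)
  (a0 a * a2 b + a1 a * a1 b + a2 a * a0 b) (a0 a * a3 b + a1 a * a2 b + a2 a * a1 b + a3 a * a0 b).
Definition mulR a b := mk4 (a1 a * a3 b + a2 a * a2 b + a3 a * a1 b) (a2 a * a3 b + a3 a * a2 b) (a3 a * a3 b) 0.
Lemma mul_id a b t : cub a t * cub b t = cub (mulC a b) t + t ^ 4 * cub (mulR a b) t.
Proof. unfold cub, mulC, mulR; simpl; ring. Qed.

Lemma approx_mul f g a b : approx f a -> approx g b -> approx (fun t => f t * g t) (mulC a b).
Proof. intros [K1 [d1 [HK1 [Hd1 H1]]]] [K2 [d2 [HK2 [Hd2 H2]]]].
  exists (sabs (mulR a b) + sabs a * K2 + sabs b * K1 + K1 * K2), (Rmin 1 (Rmin d1 d2)).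
  pose proof (sabs_ge0 a); pose proof (sabs_ge0 b); pose proof (sabs_ge0 (mulR a b)).
  repeat split.
  - pose proof (Rmult_le_pos _ _ H HK2); pose proof (Rmult_le_pos _ _ H0 HK1);
    pose proof (Rmult_le_pos _ _ HK1 HK2); lra.
  - apply Rmin_pos; [lra|apply Rmin_pos; auto].
  - intros t Ht.
  assert (A0 : Rabs t <= 1) by (left; eapply Rlt_le_trans; [exact Ht|apply Rmin_l]).
  assert (A1 : Rabs t < d1) by (eapply Rlt_le_trans; [exact Ht|]; eapply Rle_trans; [apply Rmin_r|apply Rmin_l]).
  assert (A2 : Rabs t < d2) by (eapply Rlt_le_trans; [exact Ht|]; eapply Rle_trans; [apply Rmin_r|apply Rmin_r]).
  specialize (H1 t A1); specialize (H2 t A2).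
  pose proof (t4_nonneg t) as T4; pose proof (t4_le1 t A0) as T41.
  set (e1 := f t - cub a t) in *. set (e2 := g t - cub b t) in *.
  replace (f t * g t - cub (mulC a b) t) with
    (t ^ 4 * cub (mulR a b) t + (cub a t * e2 + (cub b t * e1 + e1 * e2)))
    by (unfold e1, e2, cub, mulC, mulR; simpl; ring).
  pose proof (abs_mul_le _ _ _ _ (cub_bound a t A0) H2).
  pose proof (abs_mul_le _ _ _ _ (cub_bound b t A0) H1).
  pose proof (abs_mul_le _ _ _ _ H1 H2).
  pose proof (abs_mul_le (t^4) _ (t^4) _ (Req_le _ _ (Rabs_right _ (Rle_ge _ _ T4))) (cub_bound (mulR a b) t A0)).
  assert (K1 * t ^ 4 * (K2 * t ^ 4) <= K1 * K2 * t ^ 4).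
  { replace (K1 * t ^ 4 * (K2 * t ^ 4)) with (K1 * K2 * t^4 * t^4) by ring.
    pose proof (Rmult_le_pos _ _ HK1 HK2).
    pose proof (Rmult_le_pos _ _ H8 T4). nra. }
  pose proof (Rabs_triang (t ^ 4 * cub (mulR a b) t) (cub a t * e2 + (cub b t * e1 + e1 * e2))).
  pose proof (Rabs_triang (cub a t * e2) (cub b t * e1 + e1 * e2)).
  pose proof (Rabs_triang (cub b t * e1) (e1 * e2)). nra. Qed.
Lemma sqrt_err x q : 0 < q -> Rabs (sqrt x - q) <= Rabs (x - q ^ 2) / q.
Proof. intros Hq. destruct (Rle_or_lt 0 x) as [Hx|Hx].
  - pose proof (sqrt_pos x). pose proof (sqrt_sqrt x Hx).
    replace (x - q^2) with ((sqrt x - q) * (sqrt x + q)) by nra.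
    rewrite Rabs_mult. rewrite (Rabs_right (sqrt x + q)) by lra.
    unfold Rdiv. rewrite Rmult_assoc.
    rewrite <- (Rmult_1_r (Rabs (sqrt x - q))) at 1.
    apply Rmult_le_compat_l; [apply Rabs_pos|].
    rewrite <- (Rinv_r q) at 1 by lra. apply Rmult_le_compat_r; [left; apply Rinv_0_lt_compat; lra|lra].
  - rewrite sqrt_neg_0 by lra. rewrite Rminus_0_l, Rabs_Ropp, Rabs_right by lra.
    rewrite Rabs_left by nra. apply (Rmult_le_reg_r q); [lra|].
    unfold Rdiv; rewrite Rmult_assoc, Rinv_l by lra. nra. Qed.

Lemma t4_le_abs t : Rabs t <= 1 -> t ^ 4 <= Rabs t.
Proof. intros H. replace (t^4) with (Rabs t * Rabs (t^3)).
  - pose proof (pow_le1 t 3 H). pose proof (Rabs_pos t). pose proof (Rabs_pos (t^3)). nra.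
  - rewrite <- Rabs_mult. replace (t * t^3) with (t^4) by ring. apply Rabs_right, Rle_ge, t4_nonneg. Qed.

Definition sqrtC a b0 :=
  let b1 := a1 a / (2 * b0) in
  let b2 := (a2 a - b1 ^ 2) / (2 * b0) in
  let b3 := (a3 a - 2 * b1 * b2) / (2 * b0) in mk4 b0 b1 b2 b3.

Lemma sqrtC_sq a b0 : 0 < b0 -> b0 * b0 = a0 a -> mulC (sqrtC a b0) (sqrtC a b0) = a.
Proof. intros H E. destruct a as [x y z w]; simpl in *. unfold mulC, sqrtC; simpl.
  f_equal; [lra| field; lra | field; lra | field; lra]. Qed.

Lemma approx_sqrt f a b0 : 0 < b0 -> b0 * b0 = a0 a -> approx f a ->
  approx (fun t => sqrt (f t)) (sqrtC a b0).
Proof. intros Hb E [K [d [HK [Hd H]]]]. set (b := sqrtC a b0).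
  assert (Hs := sqrtC_sq a b0 Hb E). fold b in Hs.
  pose proof (sabs_ge0 b) as Sb. pose proof (sabs_ge0 (mulR b b)) as Sr.
  exists (2 / b0 * (K + sabs (mulR b b))), (Rmin 1 (Rmin d (b0 / (2 * (sabs b + 1))))).
  repeat split.
  - apply Rmult_le_pos; [unfold Rdiv; apply Rmult_le_pos; [lra|left; apply Rinv_0_lt_compat; lra]|lra].
  - apply Rmin_pos; [lra|apply Rmin_pos; auto]. apply Rdiv_lt_0_compat; lra.
  - intros t Ht.
  assert (A0 : Rabs t <= 1) by (left; eapply Rlt_le_trans; [exact Ht|apply Rmin_l]).
  assert (A1 : Rabs t < d) by (eapply Rlt_le_trans; [exact Ht|]; eapply Rle_trans; [apply Rmin_r|apply Rmin_l]).
  assert (A2 : Rabs t < b0 / (2 * (sabs b + 1))) by (eapply Rlt_le_trans; [exact Ht|]; eapply Rle_trans; [apply Rmin_r|apply Rmin_r]).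
  specialize (H t A1).
  assert (Q : b0 / 2 <= cub b t).
  { pose proof (cub_near b t A0). replace (a0 b) with b0 in H0 by reflexivity.
    assert (Rabs t * sabs b <= b0 / 2).
    { assert (Rabs t * (2 * (sabs b + 1)) < b0).
      { apply (Rmult_lt_compat_r (2 * (sabs b + 1))) in A2; [|lra].
        unfold Rdiv in A2; rewrite Rmult_assoc, Rinv_l in A2 by lra. lra. }
      pose proof (Rabs_pos t). nra. }
    apply Rabs_le_between in H0. lra. }
  eapply Rle_trans; [apply sqrt_err; lra|].
  pose proof (mul_id b b t) as M. rewrite Hs in M.
  assert (Rabs (f t - cub b t ^ 2) <= (K + sabs (mulR b b)) * t ^ 4).
  { replace (f t - cub b t ^ 2) with ((f t - cub a t) - t ^ 4 * cub (mulR b b) t) by (replace (cub b t ^ 2) with (cub b t * cub b t) by ring; rewrite M; ring).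
    eapply Rle_trans; [apply Rabs_triang|]. rewrite Rabs_Ropp, Rabs_mult.
    rewrite (Rabs_right (t^4)) by (apply Rle_ge, t4_nonneg).
    pose proof (cub_bound (mulR b b) t A0). pose proof (t4_nonneg t). nra. }
  pose proof (t4_nonneg t). pose proof (Rabs_pos (f t - cub b t ^ 2)).
  unfold Rdiv. apply (Rmult_le_reg_r (cub b t)); [lra|].
  rewrite Rmult_assoc, Rinv_l by lra. rewrite Rmult_1_r.
  assert (0 <= (K + sabs (mulR b b)) * t ^ 4) by (apply Rmult_le_pos; lra).
  replace (2 * / b0 * (K + sabs (mulR b b)) * t ^ 4 * cub b t) with
    ((K + sabs (mulR b b)) * t ^ 4 * (cub b t * 2 / b0)) by (field; lra).
  assert (1 <= cub b t * 2 / b0).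
  { apply (Rmult_le_reg_r b0); [lra|]. unfold Rdiv; rewrite Rmult_assoc, Rinv_l by lra. lra. }
  nra. Qed.

Definition invC b :=
  let c0 := / a0 b in
  let c1 := - (c0 * a1 b) / a0 b in
  let c2 := - (c0 * a2 b + c1 * a1 b) / a0 b in
  let c3 := - (c0 * a3 b + c1 * a2 b + c2 * a1 b) / a0 b in mk4 c0 c1 c2 c3.

Lemma invC_mul b : a0 b <> 0 -> mulC (invC b) b = mk4 1 0 0 0.
Proof. intros H. destruct b as [x y z w]; simpl in *. unfold mulC, invC; simpl.
  f_equal; field; auto. Qed.

Lemma approx_inv g b : a0 b <> 0 -> approx g b -> approx (fun t => / g t) (invC b).
Proof. intros Hb [K [d [HK [Hd H]]]]. set (c := invC b).
  assert (Hm := invC_mul b Hb). fold c in Hm.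
  pose proof (sabs_ge0 b) as Sb. pose proof (sabs_ge0 c) as Sc. pose proof (sabs_ge0 (mulR c b)) as Sr.
  set (m := Rabs (a0 b)). assert (Hm0 : 0 < m) by (apply Rabs_pos_lt; auto).
  exists (2 / m * (sabs (mulR c b) + sabs c * K)), (Rmin 1 (Rmin d (m / (2 * (K + sabs b + 1))))).
  repeat split.
  - apply Rmult_le_pos; [unfold Rdiv; apply Rmult_le_pos; [lra|left; apply Rinv_0_lt_compat; lra]|].
    pose proof (Rmult_le_pos _ _ Sc HK). lra.
  - apply Rmin_pos; [lra|apply Rmin_pos; auto]. apply Rdiv_lt_0_compat; lra.
  - intros t Ht.
  assert (A0 : Rabs t <= 1) by (left; eapply Rlt_le_trans; [exact Ht|apply Rmin_l]).
  assert (A1 : Rabs t < d) by (eapply Rlt_le_trans; [exact Ht|]; eapply Rle_trans; [apply Rmin_r|apply Rmin_l]).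
  assert (A2 : Rabs t < m / (2 * (K + sabs b + 1))) by (eapply Rlt_le_trans; [exact Ht|]; eapply Rle_trans; [apply Rmin_r|apply Rmin_r]).
  specialize (H t A1).
  pose proof (t4_nonneg t) as T4. pose proof (t4_le_abs t A0) as T4a.
  assert (G : m / 2 <= Rabs (g t)).
  { pose proof (cub_near b t A0).
    assert (Rabs t * (2 * (K + sabs b + 1)) < m).
    { apply (Rmult_lt_compat_r (2 * (K + sabs b + 1))) in A2; [|lra].
      unfold Rdiv in A2; rewrite Rmult_assoc, Rinv_l in A2 by lra. lra. }
    pose proof (Rabs_pos t).
    assert (Rabs (g t - a0 b) <= m / 2).
    { replace (g t - a0 b) with ((g t - cub b t) + (cub b t - a0 b)) by ring.
      eapply Rle_trans; [apply Rabs_triang|]. nra. }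
    pose proof (Rabs_triang_inv (a0 b) (a0 b - g t)) as TI.
    replace (a0 b - (a0 b - g t)) with (g t) in TI by ring.
    rewrite (Rabs_minus_sym (a0 b) (g t)) in TI.
    fold m in TI. lra. }
  assert (gnz : g t <> 0) by (intro Z; rewrite Z, Rabs_R0 in G; lra).
  replace (/ g t - cub c t) with ((1 - cub c t * g t) / g t) by (field; auto).
  pose proof (mul_id c b t) as M. rewrite Hm in M.
  replace (cub (mk4 1 0 0 0) t) with 1 in M by (unfold cub; simpl; ring).
  assert (Rabs (1 - cub c t * g t) <= (sabs (mulR c b) + sabs c * K) * t ^ 4).
  { replace (1 - cub c t * g t) with (- (t ^ 4 * cub (mulR c b) t) + cub c t * (cub b t - g t)) by lra.
    eapply Rle_trans; [apply Rabs_triang|]. rewrite Rabs_Ropp, Rabs_mult.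
    rewrite (Rabs_right (t^4)) by (apply Rle_ge, t4_nonneg).
    rewrite <- Rabs_Ropp in H. replace (- (g t - cub b t)) with (cub b t - g t) in H by ring.
    pose proof (abs_mul_le _ _ _ _ (cub_bound c t A0) H).
    pose proof (cub_bound (mulR c b) t A0). nra. }
  unfold Rdiv. rewrite Rabs_mult, Rabs_inv.
  assert (0 < Rabs (g t)) by lra.
  apply (Rmult_le_reg_r (Rabs (g t))); [lra|].
  rewrite Rmult_assoc, Rinv_l by lra. rewrite Rmult_1_r.
  assert (0 <= (sabs (mulR c b) + sabs c * K) * t ^ 4) by (pose proof (Rmult_le_pos _ _ Sc HK); apply Rmult_le_pos; lra).
  replace (2 * / m * (sabs (mulR c b) + sabs c * K) * t ^ 4 * Rabs (g t)) with
    ((sabs (mulR c b) + sabs c * K) * t ^ 4 * (Rabs (g t) * 2 / m)) by (field; lra).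
  assert (1 <= Rabs (g t) * 2 / m).
  { apply (Rmult_le_reg_r m); [lra|]. unfold Rdiv; rewrite Rmult_assoc, Rinv_l by lra. lra. }
  nra. Qed.
Lemma Dn_exp c n : forall x, Derive_n (fun u => exp (c * u)) n x = c ^ n * exp (c * x).
Proof. induction n; intros x; simpl. - ring.
  - rewrite (Derive_ext _ (fun u => c ^ n * exp (c * u))) by auto.
    apply is_derive_unique. auto_derive; auto. ring. Qed.

Lemma exDn_exp c n x : ex_derive_n (fun u => exp (c * u)) n x.
Proof. destruct n; simpl; auto.
  apply (ex_derive_ext (fun u => c ^ n * exp (c * u))). intros; symmetry; apply Dn_exp.
  auto_derive; auto. Qed.

Lemma exp_taylor_pos c s : c * c = 1 -> 0 < s < 1 ->
  Rabs (exp (c * s) - (1 + c * s + c ^ 2 / 2 * s ^ 2 + c ^ 3 / 6 * s ^ 3)) <= s ^ 4.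
Proof. intros Hc Hs.
  destruct (Taylor_Lagrange (fun u => exp (c * u)) 3 0 s (proj1 Hs)) as [z [Hz E]].
  { intros; apply exDn_exp. }
  cbn [sum_f_R0] in E. rewrite !Dn_exp in E.
  replace (c * 0) with 0 in E by ring. rewrite exp_0 in E.
  simpl Factorial.fact in E. simpl INR in E.
  assert (E4 : c ^ 4 = 1) by (replace (c^4) with ((c*c)*(c*c)) by ring; rewrite Hc; ring).
  rewrite E4 in E.
  assert (D : exp (c * s) - (1 + c * s + c ^ 2 / 2 * s ^ 2 + c ^ 3 / 6 * s ^ 3) = s ^ 4 / 24 * exp (c * z))
    by (rewrite E; field).
  rewrite D. rewrite Rabs_right.
  2:{ apply Rle_ge, Rmult_le_pos; [pose proof (t4_nonneg s); lra| left; apply exp_pos]. }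
  assert (exp (c * z) <= 3).
  { assert (c * z <= 1). { assert (c <= 1) by nra. assert (- 1 <= c) by nra. nra. }
    apply Rle_trans with (exp 1); [|apply exp_le_3].
    destruct (Req_dec (c*z) 1) as [->|]; [lra|]. left; apply exp_increasing; lra. }
  pose proof (t4_nonneg s). nra. Qed.

Lemma approx_expc c : c * c = 1 ->
  approx (fun t => exp (c * t)) (mk4 1 c (c ^ 2 / 2) (c ^ 3 / 6)).
Proof. intros Hc. exists 1, 1; repeat split; try lra. intros t Ht. unfold cub; cbn [a0 a1 a2 a3].
  destruct (Rtotal_order t 0) as [Hn|[H0|Hp]].
  - assert (H := exp_taylor_pos (- c) (- t) ltac:(nra) ltac:(split; [lra| apply Rabs_def2 in Ht; lra])).
    replace (- c * - t) with (c * t) in H by ring.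
    replace (1 * t ^ 4) with ((-t)^4) by ring.
    assert (EE : (1 + c * t + (- c) ^ 2 / 2 * (- t) ^ 2 + (- c) ^ 3 / 6 * (- t) ^ 3) = 1 + c * t + c ^ 2 / 2 * t ^ 2 + c ^ 3 / 6 * t ^ 3) by field.
    rewrite EE in H. exact H.
  - subst. assert (Z: exp (c*0) - (1 + c*0 + c^2/2*0^2 + c^3/6*0^3) = 0) by (rewrite Rmult_0_r, exp_0; field).
    rewrite Z, Rabs_R0. simpl; lra.
  - assert (H := exp_taylor_pos c t Hc ltac:(split; [lra| apply Rabs_def2 in Ht; lra])). lra. Qed.
Lemma approx_sqrt2 f a b0 : approx f a -> 0 < b0 -> b0 * b0 = a0 a ->
  approx (fun t => sqrt (f t)) (sqrtC a b0).
Proof. intros; apply approx_sqrt; auto. Qed.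
Lemma approx_inv2 g b : approx g b -> a0 b <> 0 -> approx (fun t => / g t) (invC b).
Proof. intros; apply approx_inv; auto. Qed.

Ltac nrm := unfold mulC, invC, sqrtC, addC, scalC; cbn [a0 a1 a2 a3]; field.

Lemma approx_cosh : approx cosh (mk4 1 0 (/2) 0).
Proof.
  pose proof (approx_expc 1 ltac:(ring)) as E1. pose proof (approx_expc (-1) ltac:(ring)) as E2.
  pose proof (approx_scal (/2) _ _ (approx_add _ _ _ _ E1 E2)) as H.
  eapply approx_eq; [eapply approx_ext; [|exact H]|..]; [|nrm..].
  intros t; unfold cosh; cbv beta. replace (1 * t) with t by ring. replace (-1 * t) with (- t) by ring. field. Qed.

Lemma approx_sinh : approx sinh (mk4 0 1 0 (/6)).
Proof.
  pose proof (approx_expc 1 ltac:(ring)) as E1. pose proof (approx_expc (-1) ltac:(ring)) as E2.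
  pose proof (approx_scal (/2) _ _ (approx_add _ _ _ _ E1 (approx_scal (-1) _ _ E2))) as H.
  eapply approx_eq; [eapply approx_ext; [|exact H]|..]; [|nrm..].
  intros t; unfold sinh; cbv beta. replace (1 * t) with t by ring. replace (-1 * t) with (- t) by ring. field. Qed.

Lemma approx_tanh : approx tanh (mk4 0 1 0 (- / 3)).
Proof.
  pose proof (approx_mul _ _ _ _ approx_sinh (approx_inv2 _ _ approx_cosh ltac:(cbn; lra))) as H.
  eapply approx_eq; [eapply approx_ext; [|exact H]|..]; [|nrm..].
  intros t; unfold tanh; cbv beta. reflexivity. Qed.

Definition Xf t := cosh t * sqrt (cosh t).
Lemma approx_X : approx Xf (mk4 1 0 (3/4) 0).
Proof.
  pose proof (approx_mul _ _ _ _ approx_cosh (approx_sqrt2 _ _ 1 approx_cosh ltac:(lra) ltac:(cbn; ring))) as H.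
  eapply approx_eq; [exact H|..]; nrm. Qed.

Definition Gf n t := Xf t * ((1 - tanh t ^ 2 + sqrt (1 + 2 * n * tanh t + tanh t ^ 2))
   / sqrt (2 * (1 + n * tanh t + sqrt (1 + 2 * n * tanh t + tanh t ^ 2)))).

Lemma approx_G n : approx (Gf n) (mk4 1 0 (3/8) (n/8)).
Proof.
  assert (R2 : approx (fun t => tanh t ^ 2) (mk4 0 0 1 0)).
  { eapply approx_eq; [eapply approx_ext; [|exact (approx_mul _ _ _ _ approx_tanh approx_tanh)]|..]; [|nrm..].
    intros; cbv beta; ring. }
  assert (In : approx (fun t => 1 + 2 * n * tanh t + tanh t ^ 2) (mk4 1 (2 * n) 1 (- 2 * n / 3))).
  { eapply approx_eq; [eapply approx_ext; [|exact (approx_add _ _ _ _ (approx_add _ _ _ _ (approx_const 1) (approx_scal (2 * n) _ _ approx_tanh)) R2)]|..]; [|nrm..].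
    intros; cbv beta; ring. }
  assert (Sq : approx (fun t => sqrt (1 + 2 * n * tanh t + tanh t ^ 2)) (mk4 1 n ((1 - n ^ 2) / 2) ((n ^ 3 - 5 * n / 3) / 2))).
  { eapply approx_eq; [exact (approx_sqrt2 _ _ 1 In ltac:(lra) ltac:(cbn; ring))|..]; nrm. }
  assert (Nu : approx (fun t => 1 - tanh t ^ 2 + sqrt (1 + 2 * n * tanh t + tanh t ^ 2)) (mk4 2 n (- (1 + n ^ 2) / 2) ((n ^ 3 - 5 * n / 3) / 2))).
  { eapply approx_eq; [eapply approx_ext; [|exact (approx_add _ _ _ _ (approx_add _ _ _ _ (approx_const 1) (approx_scal (-1) _ _ R2)) Sq)]|..]; [|nrm..].
    intros; cbv beta; ring. }
  assert (Da : approx (fun t => 2 * (1 + n * tanh t + sqrt (1 + 2 * n * tanh t + tanh t ^ 2))) (mk4 4 (4 * n) (1 - n ^ 2) (n ^ 3 - 7 * n / 3))).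
  { eapply approx_eq; [exact (approx_scal 2 _ _ (approx_add _ _ _ _ (approx_add _ _ _ _ (approx_const 1) (approx_scal n _ _ approx_tanh)) Sq))|..]; nrm. }
  assert (Ds : approx (fun t => sqrt (2 * (1 + n * tanh t + sqrt (1 + 2 * n * tanh t + tanh t ^ 2)))) (mk4 2 n ((1 - 2 * n ^ 2) / 4) (n ^ 3 / 2 - 17 * n / 24))).
  { eapply approx_eq; [exact (approx_sqrt2 _ _ 2 Da ltac:(lra) ltac:(cbn; ring))|..]; nrm. }
  assert (Di : approx (fun t => / sqrt (2 * (1 + n * tanh t + sqrt (1 + 2 * n * tanh t + tanh t ^ 2)))) (mk4 (/2) (- n / 4) ((4 * n ^ 2 - 1) / 16) (- 5 * n ^ 3 / 16 + 23 * n / 96))).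
  { eapply approx_eq; [exact (approx_inv2 _ _ Ds ltac:(cbn; lra))|..]; nrm. }
  assert (Ra : approx (fun t => (1 - tanh t ^ 2 + sqrt (1 + 2 * n * tanh t + tanh t ^ 2))
   / sqrt (2 * (1 + n * tanh t + sqrt (1 + 2 * n * tanh t + tanh t ^ 2)))) (mk4 1 0 (- 3 / 8) (n / 8))).
  { eapply approx_eq; [exact (approx_mul _ _ _ _ Nu Di)|..]; nrm. }
  eapply approx_eq; [exact (approx_mul _ _ _ _ approx_X Ra)|..]; nrm. Qed.
Lemma cosh_pos x : 0 < cosh x.
Proof. unfold cosh. pose proof (exp_pos x); pose proof (exp_pos (-x)). lra. Qed.

Lemma cosh_sinh x : cosh x ^ 2 - sinh x ^ 2 = 1.
Proof. unfold cosh, sinh. assert (exp x * exp (- x) = 1) by (rewrite <- exp_plus; replace (x + - x) with 0 by ring; apply exp_0).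
  nra. Qed.

Lemma one_m_tanh x : 1 - tanh x ^ 2 = / (cosh x ^ 2).
Proof. pose proof (cosh_pos x). pose proof (cosh_sinh x). unfold tanh.
  replace (1 - (sinh x / cosh x) ^ 2) with ((cosh x ^ 2 - sinh x ^ 2) / cosh x ^ 2) by (field; lra). rewrite H0. field. lra. Qed.

Lemma inv_rpow x : / Rpower (1 - tanh x ^ 2) (3 / 4) = Xf x.
Proof. pose proof (cosh_pos x) as P. rewrite one_m_tanh.
  assert (E : / cosh x ^ 2 = Rpower (cosh x) (- (2))).
  { rewrite Rpower_Ropp. replace 2 with (INR 2) by (simpl; ring). rewrite Rpower_pow by lra. reflexivity. }
  rewrite E, Rpower_mult. replace (- (2) * (3/4)) with (- (1 + /2)) by field.
  rewrite Rpower_Ropp, Rinv_inv, Rpower_plus, Rpower_1, Rpower_sqrt by lra. reflexivity. Qed.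

Lemma bigO0_ext f g h : (forall x, f x = g x) -> bigO0 f h -> bigO0 g h.
Proof. intros E [C [dl [Hd H]]]. exists C, dl; split; auto. intros x Hx. rewrite <- E; auto. Qed.

Lemma conv1 G a k A c T : approx G a -> k <> 0 -> c <> 0 ->
  (forall p, T p = A * cub a (k * p)) ->
  bigO0 (fun p => A * G (k * p) - T p) (fun p => (c * p) ^ 4).
Proof. intros [K [dl [HK [Hd H]]]] Hk Hc E.
  assert (Pk : 0 < Rabs k) by (apply Rabs_pos_lt; auto).
  exists (Rabs A * K * k ^ 4 / c ^ 4), (dl / Rabs k). split; [apply Rdiv_lt_0_compat; lra|].
  intros p Hp. rewrite E.
  assert (Rabs (k * p) < dl).
  { rewrite Rabs_mult. apply (Rmult_lt_compat_l (Rabs k)) in Hp; auto.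
    replace (Rabs k * (dl / Rabs k)) with dl in Hp by (field; lra). lra. }
  specialize (H _ H0).
  replace (A * G (k * p) - A * cub a (k * p)) with (A * (G (k * p) - cub a (k * p))) by ring.
  rewrite Rabs_mult. rewrite (Rabs_right ((c * p) ^ 4)) by (apply Rle_ge, t4_nonneg).
  replace (Rabs A * K * k ^ 4 / c ^ 4 * (c * p) ^ 4) with (Rabs A * (K * (k * p) ^ 4)) by (field; auto).
  apply Rmult_le_compat_l; auto using Rabs_pos. Qed.

Lemma conv2 G a2' a3' k A : approx G (mk4 1 0 a2' a3') -> k <> 0 ->
  bigO0 (fun p => A * G (k * p) - (A + A * a2' * (k * p) ^ 2)) (fun p => p ^ 3).
Proof. intros [K [dl [HK [Hd H]]]] Hk.
  assert (Pk : 0 < Rabs k) by (apply Rabs_pos_lt; auto).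
  exists (Rabs A * (Rabs a3' * Rabs k ^ 3 + K * k ^ 4)), (Rmin 1 (dl / Rabs k)).
  split; [apply Rmin_pos; [lra|apply Rdiv_lt_0_compat; lra]|].
  intros p Hp.
  assert (A0 : Rabs p <= 1) by (left; eapply Rlt_le_trans; [exact Hp|apply Rmin_l]).
  assert (A1 : Rabs p < dl / Rabs k) by (eapply Rlt_le_trans; [exact Hp|apply Rmin_r]).
  assert (Rabs (k * p) < dl).
  { rewrite Rabs_mult. apply (Rmult_lt_compat_l (Rabs k)) in A1; auto.
    replace (Rabs k * (dl / Rabs k)) with dl in A1 by (field; lra). lra. }
  specialize (H _ H0). unfold cub in H; cbn [a0 a1 a2 a3] in H.
  replace (A * G (k * p) - (A + A * a2' * (k * p) ^ 2)) with
    (A * ((G (k * p) - (1 + 0 * (k * p) + a2' * (k * p) ^ 2 + a3' * (k * p) ^ 3)) + a3' * k ^ 3 * p ^ 3)) by ring.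
  rewrite Rabs_mult, (Rmult_assoc (Rabs A)). apply Rmult_le_compat_l; [apply Rabs_pos|].
  eapply Rle_trans; [apply Rabs_triang|].
  rewrite (Rabs_mult (a3' * k ^ 3)), Rabs_mult, <- RPow_abs.
  assert (p ^ 4 <= Rabs (p ^ 3)).
  { replace (p ^ 4) with (Rabs p * Rabs (p ^ 3)).
    - pose proof (Rabs_pos (p^3)). nra.
    - rewrite <- Rabs_mult. replace (p * p^3) with (p^4) by ring. apply Rabs_right, Rle_ge, t4_nonneg. }
  replace ((k * p) ^ 4) with (k ^ 4 * p ^ 4) in H by ring.
  assert (0 <= K * k ^ 4) by (apply Rmult_le_pos; auto; apply t4_nonneg).
  pose proof (Rabs_pos a3'). pose proof (Rabs_pos (p ^ 3)). pose proof (pow_le (Rabs k) 3 (Rabs_pos k)).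
  nra. Qed.
Lemma ratio_bound r n : 0 < r < 1 -> 1 <= n ->
  Rabs ((1 - r^2 + sqrt(1+2*n*r+r^2)) / sqrt(2*(1+n*r+sqrt(1+2*n*r+r^2))) - 1)
  <= r ^ 2 * (1 - r ^ 2 + 2 * sqrt(1+2*n*r+r^2)) / (2*(1+n*r+sqrt(1+2*n*r+r^2))).
Proof. intros Hr Hn.
  set (X := 1+2*n*r+r^2). assert (HX : 0 < X) by (unfold X; nra).
  set (s := sqrt X). assert (Hs : 0 < s) by (apply sqrt_lt_R0; auto).
  assert (Hs2 : s * s = X) by (apply sqrt_sqrt; lra).
  set (D := 2*(1+n*r+s)). assert (HD : 0 < D) by (unfold D; nra).
  set (q := sqrt D). assert (Hq : 0 < q) by (apply sqrt_lt_R0; auto).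
  assert (Hq2 : q * q = D) by (apply sqrt_sqrt; lra).
  set (N := 1 - r^2 + s). assert (HN : 0 < N) by (unfold N; nra).
  assert (E : N / q - 1 = (N * N - D) / (q * (N + q))) by (rewrite <- Hq2; field; lra).
  rewrite E. assert (E2 : N * N - D = - (r ^ 2 * (1 - r ^ 2 + 2 * s))) by (unfold N, D; unfold X in Hs2; nra).
  rewrite E2. unfold Rdiv. rewrite Rabs_mult, Rabs_Ropp, Rabs_inv.
  assert (P : 0 <= r ^ 2 * (1 - r ^ 2 + 2 * s)) by (apply Rmult_le_pos; [apply pow2_ge_0|nra]).
  rewrite Rabs_right by lra. rewrite (Rabs_right (q * (N + q))) by nra.
  apply Rmult_le_compat_l; auto. rewrite <- Hq2. apply Rinv_le_contravar; nra. Qed.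

Lemma ratio_lim r : 0 < r < 1 ->
  is_lim (fun n => (1 - r^2 + sqrt(1+2*n*r+r^2)) / sqrt(2*(1+n*r+sqrt(1+2*n*r+r^2)))) p_infty 1.
Proof. intros Hr. apply is_lim_spec. intros eps. simpl.
  pose proof (cond_pos eps) as He.
  set (Q := 5 / (2 * eps * r) + 1).
  assert (HQ : 5 / (2 * eps * r) < Q) by (unfold Q; lra).
  assert (HQ1 : 1 <= Q) by (unfold Q; assert (0 < 5 / (2 * eps * r)) by (apply Rdiv_lt_0_compat; nra); lra).
  exists (Q ^ 2). intros n Hn.
  assert (Hn1 : 1 <= n) by nra.
  set (w := sqrt n). assert (Hw2 : w * w = n) by (apply sqrt_sqrt; lra).
  assert (Hw : Q < w).
  { unfold w. rewrite <- (sqrt_pow2 Q) by lra. apply sqrt_lt_1; nra. }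
  eapply Rle_lt_trans; [apply ratio_bound; auto|].
  set (s := sqrt (1 + 2 * n * r + r ^ 2)).
  assert (Hs0 : 0 <= s) by apply sqrt_pos.
  assert (Hs : s <= 2 * w).
  { unfold s. rewrite <- (sqrt_pow2 (2 * w)) by nra. apply sqrt_le_1_alt. nra. }
  assert (Hw5 : 5 < 2 * eps * r * w).
  { apply (Rmult_lt_compat_r (2 * eps * r)) in HQ; [|nra].
    unfold Rdiv in HQ. rewrite Rmult_assoc, Rinv_l in HQ by nra. nra. }
  apply (Rmult_lt_reg_r (2 * (1 + n * r + s))); [nra|].
  unfold Rdiv. rewrite Rmult_assoc, Rinv_l by nra. rewrite Rmult_1_r.
  assert (r ^ 2 * (1 - r ^ 2 + 2 * s) <= 1 + 4 * w).
  { assert (0 <= 1 - r ^ 2 + 2 * s) by nra. assert (r ^ 2 <= 1) by nra.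
    apply Rle_trans with (1 * (1 - r ^ 2 + 2 * s)); [apply Rmult_le_compat_r; lra|]. nra. }
  assert (1 + 4 * w < eps * (2 * n * r)).
  { rewrite <- Hw2. nra. }
  nra. Qed.
Lemma deriv_X k p : is_derive (fun p => Xf (k * p)) p (k * (3/2) * sinh (k * p) * sqrt (cosh (k * p))).
Proof.
  pose proof (cosh_pos (k * p)) as Hc. assert (Hs := sqrt_lt_R0 _ Hc).
  assert (Hs2 := sqrt_sqrt _ (Rlt_le _ _ Hc)).
  unfold Xf, sinh. unfold cosh in *. auto_derive.
  - lra.
  - set (E := (exp (k * p) + exp (- (k * p))) / 2) in *.
    set (q := sqrt E) in *.
    change (sqrt ((exp (k * p) + exp (- (k * p))) * / 2)) with q.
    change ((exp (k * p) + exp (- (k * p))) * / 2) with E. rewrite <- Hs2.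
    field. lra. Qed.
Lemma tanh_bounds x : 0 < x -> 0 < tanh x < 1.
Proof. intros Hx. pose proof (cosh_pos x). unfold tanh.
  assert (exp (- x) < exp x) by (apply exp_increasing; lra).
  assert (0 < sinh x) by (unfold sinh; lra).
  assert (sinh x < cosh x) by (unfold sinh, cosh; pose proof (exp_pos (-x)); lra).
  split; [apply Rdiv_lt_0_compat; lra|]. apply (Rmult_lt_reg_r (cosh x)); [lra|].
  unfold Rdiv; rewrite Rmult_assoc, Rinv_l by lra. lra. Qed.

Theorem mainTheorem5 (d : nat) (kappa l : R)
  (hd : (2 <= d)%nat) (hk : 0 < kappa) (hl : 0 < l) :
  (forall nu : R, -1 <= nu ->
     bigO0 (fun phi => Wsup d kappa l nu phi
              - (- (INR d - 1) / (kappa ^ 2 * l)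
                 * (1 + / 6 * psi d kappa phi ^ 2
                      + / 27 * nu * psi d kappa phi ^ 3)))
           (fun phi => psi d kappa phi ^ 4)) /\
  (forall phi : R, 0 < phi ->
     is_lim (fun nu => Wsup d kappa l nu phi) p_infty (Winf d kappa l phi)) /\
  (forall phi : R,
     ex_derive (Winf d kappa l) phi /\
     Vpot d kappa l phi =
       / 2 * (Derive (Winf d kappa l) phi ^ 2
              - INR d * kappa ^ 2 / (INR d - 1) * Winf d kappa l phi ^ 2)) /\
  bigO0 (fun phi => Winf d kappa l phi
           - (- (INR d - 1) / (kappa ^ 2 * l) * (1 + / 3 * psi d kappa phi ^ 2)))
        (fun phi => psi d kappa phi ^ 4) /\
  (forall nu : R, -1 <= nu ->
     bigO0 (fun phi => Wsup d kappa l nu phi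
              - (- (INR d - 1) / (kappa ^ 2 * l) - Delta_minus d / (2 * l) * phi ^ 2))
           (fun phi => phi ^ 3)) /\
  bigO0 (fun phi => Winf d kappa l phi
           - (- (INR d - 1) / (kappa ^ 2 * l) - Delta_plus d / (2 * l) * phi ^ 2))
        (fun phi => phi ^ 3).
Proof.
  assert (Hd : 2 <= INR d) by (replace 2 with (INR 2) by (simpl; ring); apply le_INR; auto).
  set (c := cK d kappa).
  assert (Hq : 0 < INR d * kappa ^ 2 / (INR d - 1)) by (apply Rdiv_lt_0_compat; nra).
  assert (Hc : 0 < c) by (apply sqrt_lt_R0; auto).
  assert (Hc2 : c * c = INR d * kappa ^ 2 / (INR d - 1)) by (apply sqrt_sqrt; lra).
  set (A := - (INR d - 1) / (kappa ^ 2 * l)).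
  set (k := 2 / 3 * c).
  assert (Hk : k <> 0) by (unfold k; lra).
  assert (WsE : forall nu phi, Wsup d kappa l nu phi = A * Gf nu (k * phi)).
  { intros nu phi. unfold Wsup, rho, Gf; cbv zeta. fold c. fold k. rewrite inv_rpow. unfold A. ring. }
  assert (WiE : forall phi, Winf d kappa l phi = A * Xf (k * phi)).
  { intros phi. unfold Winf, rho; cbv zeta. fold c. fold k. rewrite Rpower_Ropp, inv_rpow. reflexivity. }
  assert (KA : A * (3 / 8) * k ^ 2 = - Delta_minus d / (2 * l)).
  { unfold A, k, Delta_minus. replace ((2 / 3 * c) ^ 2) with (4 / 9 * (c * c)) by field. rewrite Hc2.
    field. repeat split; nra. }
  assert (KB : A * (3 / 4) * k ^ 2 = - Delta_plus d / (2 * l)).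
  { unfold A, k, Delta_plus. replace ((2 / 3 * c) ^ 2) with (4 / 9 * (c * c)) by field. rewrite Hc2.
    field. repeat split; nra. }
  split; [|split; [|split; [|split; [|split]]]].
  - intros nu _.
    eapply bigO0_ext; [|apply (conv1 (Gf nu) (mk4 1 0 (3/8) (nu/8)) k A c
        (fun phi => A * (1 + / 6 * psi d kappa phi ^ 2 + / 27 * nu * psi d kappa phi ^ 3)));
        [apply approx_G|exact Hk|lra|]].
    + intros x. rewrite WsE. reflexivity.
    + intros p. unfold cub, psi, k; cbn [a0 a1 a2 a3]. fold c. field.
  - intros phi Hphi.
    assert (Hr := tanh_bounds (k * phi) ltac:(unfold k; nra)).
    set (r := tanh (k * phi)) in *.
    apply (is_lim_ext (fun nu => (A * / Rpower (1 - r ^ 2) (3 / 4)) *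
      ((1 - r^2 + sqrt(1+2*nu*r+r^2)) / sqrt(2*(1+nu*r+sqrt(1+2*nu*r+r^2)))))).
    { intros nu. unfold Wsup, rho; cbv zeta. fold c k r. unfold A. ring. }
    replace (Finite (Winf d kappa l phi)) with (Rbar_mult (A * / Rpower (1 - r ^ 2) (3 / 4)) 1).
    + apply is_lim_scal_l. apply ratio_lim; auto.
    + simpl. unfold Winf, rho; cbv zeta. fold c k r. rewrite Rpower_Ropp. unfold A. f_equal. replace (r * (r * 1)) with (r ^ 2) by ring. ring.
  - intros phi.
    assert (D : is_derive (Winf d kappa l) phi (A * (k * (3/2) * sinh (k * phi) * sqrt (cosh (k * phi))))).
    { apply (is_derive_ext (fun p => A * Xf (k * p))); [intros; rewrite WiE; reflexivity|].
      apply is_derive_scal, deriv_X. }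
    split; [exists (A * (k * (3/2) * sinh (k * phi) * sqrt (cosh (k * phi)))); exact D|].
    rewrite (is_derive_unique _ _ _ D), WiE. unfold Vpot, Xf. fold c k.
    pose proof (cosh_pos (k * phi)) as HC. pose proof (cosh_sinh (k * phi)) as CS.
    set (C := cosh (k * phi)) in *. set (S := sinh (k * phi)) in *.
    assert (Hs2 := sqrt_sqrt _ (Rlt_le _ _ HC)). set (q := sqrt C) in *.
    transitivity (/ 2 * (A ^ 2 * ((k * (3/2)) * (k * (3/2))) * S ^ 2 * (q * q)
       - INR d * kappa ^ 2 / (INR d - 1) * (A ^ 2 * C ^ 2 * (q * q)))); [|ring].
    rewrite Hs2. replace (k * (3/2) * (k * (3/2))) with (c * c) by (unfold k; field).
    rewrite Hc2. replace (S ^ 2) with (C ^ 2 - 1) by lra. unfold A. field. split; [lra|]. split; [lra|]. nra.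
  - eapply bigO0_ext; [|apply (conv1 Xf (mk4 1 0 (3/4) 0) k A c
        (fun phi => A * (1 + / 3 * psi d kappa phi ^ 2)));
        [apply approx_X|exact Hk|lra|]].
    + intros x. rewrite WiE. reflexivity.
    + intros p. unfold cub, psi, k; cbn [a0 a1 a2 a3]. fold c. field.
  - intros nu _.
    eapply bigO0_ext; [|apply (conv2 (Gf nu) (3/8) (nu/8) k A); [apply approx_G|exact Hk]].
    intros x. rewrite WsE. replace (A * (3 / 8) * (k * x) ^ 2) with (A * (3 / 8) * k ^ 2 * x ^ 2) by ring.
    rewrite KA. unfold Rdiv. ring.
  - eapply bigO0_ext; [|apply (conv2 Xf (3/4) 0 k A); [apply approx_X|exact Hk]].
    intros x. rewrite WiE. replace (A * (3 / 4) * (k * x) ^ 2) with (A * (3 / 4) * k ^ 2 * x ^ 2) by ring.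
    rewrite KB. unfold Rdiv. ring.
Qed.
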